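(* Let $E$ be a real Hilbert space with $\dim(E)\ge2$, $h\in E$ a unit vector, and $f:\mathbb{R}_{\ge0}\to\mathbb{R}_{\ge0}$ with $f(d)=0$ iff $d=0$. Let $x\preceq_f y\iff f(\|y_\perp-x_\perp\|)\le y_h-x_h$, and assume $(E,\preceq_f)$ is a sponge. Then the following are equivalent: (1) the relation $\preceq_f$ is topologically closed in $E\times E$; (2) $f$ is lower semicontinuous; (3) $f$ is ascending (non-decreasing); (4) $f$ is increasing (strictly increasing); (5) $f$ is superadditive. If $\dim(E)\ge3$, all of these properties hold.
   Context: For $x\in E$ write $x=x_h h+x_\perp$ with $x_h=(x,h)$ and $x_\perp$ orthogonal to $h$. An oriented set $(S,\preceq)$ (with $\preceq$ reflexive and antisymmetric) is a sponge if every finite, nonempty, right-bounded subset has a join and every finite, nonempty, left-bounded subset has a meet. Here $P$ is right-bounded if some $s$ has $p\preceq s$ for all $p\in P$; the join of $P$ is an $x$ with $p\preceq x$ for all $p\in P$ and $x\preceq y$ whenever $p\preceq y$ for all $p\in P$; left-bounded and meet are dual. $f$ is superadditive if $f(x+y)\ge f(x)+f(y)$ for all $x,y\ge0$. *)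

(* Defs.v *)
From HB Require Import structures.
From mathcomp Require Import all_boot all_order all_algebra.
From mathcomp Require Import all_classical all_reals all_analysis.
Set Implicit Arguments. Unset Strict Implicit. Unset Printing Implicit Defensive.
Import Order.TTheory GRing.Theory Num.Theory.
Import numFieldNormedType.Exports.
Local Open Scope classical_set_scope.
Local Open Scope ring_scope.

Definition inner_product (R : realType) (E : normedModType R)
    (ip : E -> E -> R) : Prop :=
  [/\ (forall x y, ip x y = ip y x),
      (forall (a : R) x y z, ip (a *: x + y) z = a * ip x z + ip y z)
    & (forall x, `|x| = Num.sqrt (ip x x))].

Definition lin_indep (R : realType) (E : normedModType R) (n : nat)
    (v : 'I_n -> E) : Prop :=
  forall c : 'I_n -> R, \sum_(i < n) c i *: v i = 0 -> forall i, c i = 0.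

Definition dim_ge (R : realType) (E : normedModType R) (n : nat) : Prop :=
  exists v : 'I_n -> E, lin_indep v.

Definition hcomp (R : realType) (E : normedModType R) (ip : E -> E -> R)
  (h x : E) : R := ip x h.
Definition perp (R : realType) (E : normedModType R) (ip : E -> E -> R)
  (h x : E) : E := x - (ip x h) *: h.

Definition fle (R : realType) (E : normedModType R) (ip : E -> E -> R)
  (h : E) (f : R -> R) (x y : E) : Prop :=
  f `|perp ip h y - perp ip h x| <= hcomp ip h y - hcomp ip h x.

Definition oriented (T : Type) (le : T -> T -> Prop) : Prop :=
  (forall x, le x x) /\ (forall x y, le x y -> le y x -> x = y).

Definition is_join (T : Type) (le : T -> T -> Prop) (P : set T) (x : T) :=
  (forall p, P p -> le p x) /\ (forall y, (forall p, P p -> le p y) -> le x y).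
Definition is_meet (T : Type) (le : T -> T -> Prop) (P : set T) (x : T) :=
  (forall p, P p -> le x p) /\ (forall y, (forall p, P p -> le y p) -> le y x).

Definition sponge (T : Type) (le : T -> T -> Prop) : Prop :=
  [/\ oriented le,
      (forall P : set T, finite_set P -> P !=set0 ->
         (exists s, forall p, P p -> le p s) -> exists x, is_join le P x)
    & (forall P : set T, finite_set P -> P !=set0 ->
         (exists s, forall p, P p -> le s p) -> exists x, is_meet le P x)].

(* properties of f : R_{>=0} -> R_{>=0} (only values on [0,oo) matter) *)
Definition lsc_nonneg (R : realType) (f : R -> R) : Prop :=
  forall x, 0 <= x -> forall e, 0 < e -> exists2 d, 0 < d &
    forall y, 0 <= y -> `|y - x| < d -> f x - e < f y.
Definition ascending_nonneg (R : realType) (f : R -> R) : Prop :=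
  forall a b, 0 <= a -> a <= b -> f a <= f b.
Definition increasing_nonneg (R : realType) (f : R -> R) : Prop :=
  forall a b, 0 <= a -> a < b -> f a < f b.
Definition superadditive (R : realType) (f : R -> R) : Prop :=
  forall x y, 0 <= x -> 0 <= y -> f x + f y <= f (x + y).

(* Main.v *)
Require Import Defs.
From HB Require Import structures.
From mathcomp Require Import all_boot all_order all_algebra.
From mathcomp Require Import all_classical all_reals all_analysis.
From mathcomp Require Import ring lra.
Import Order.TTheory GRing.Theory Num.Theory.
Import numFieldNormedType.Exports.
Local Open Scope classical_set_scope.
Local Open Scope ring_scope.
Set Implicit Arguments. Unset Strict Implicit. Unset Printing Implicit Defensive.
Section IP.
Variables (R : realType) (E : normedModType R) (ip : E -> E -> R).
Hypothesis Hip : inner_product ip.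

Lemma ipD x y z : ip (x + y) z = ip x z + ip y z.
Proof. by case: Hip => _ H _; have := H 1 x y z; rewrite scale1r mul1r. Qed.
Lemma ipZ a x z : ip (a *: x) z = a * ip x z.
Proof.
case: Hip => _ H _.
have h0 : ip 0 z = 0.
  have := H 1 0 0 z; rewrite scale1r addr0 mul1r => /eqP.
  by rewrite -subr_eq0 opprD addrA subrr add0r oppr_eq0 => /eqP.
by rewrite -[a *: x]addr0 H h0 addr0.
Qed.
Lemma ip0 z : ip 0 z = 0.
Proof. by rewrite -(scale0r (0:E)) ipZ mul0r. Qed.
Lemma ipN x z : ip (- x) z = - ip x z.
Proof. by rewrite -scaleN1r ipZ mulN1r. Qed.
Lemma ipB x y z : ip (x - y) z = ip x z - ip y z.
Proof. by rewrite ipD ipN. Qed.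
Lemma ipC x y : ip x y = ip y x.
Proof. by case: Hip. Qed.
Lemma ip_ge0 x : 0 <= ip x x.
Proof.
case: Hip => _ _ H; rewrite leNgt; apply/negP => lt0.
have : `|x| = 0 by rewrite H; apply/eqP; rewrite sqrtr_eq0 ltW.
by move/normr0_eq0 => x0; move: lt0; rewrite x0 ip0 ltxx.
Qed.
Lemma normE2 x : `|x| ^+ 2 = ip x x.
Proof. by case: Hip => _ _ H; rewrite H sqr_sqrtr // ip_ge0. Qed.
End IP.

Section Geo.
Variables (R : realType) (E : normedModType R) (ip : E -> E -> R) (h e : E).
Hypothesis Hip : inner_product ip.
Hypothesis Hhh : ip h h = 1.
Hypothesis Heh : ip e h = 0.
Hypothesis Hee : ip e e = 1.

Local Notation perp := (perp ip h).
Local Notation hcomp := (hcomp ip h).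

Lemma perpE x : perp x = x - ip x h *: h. Proof. by []. Qed.
Lemma hcompE x : hcomp x = ip x h. Proof. by []. Qed.

Lemma perpB x y : perp y - perp x = perp (y - x).
Proof.
rewrite !perpE (ipB Hip) scalerBl !opprB addrACA [in RHS]addrACA.
by rewrite [- x + _]addrC.
Qed.
Lemma hcompB x y : hcomp y - hcomp x = hcomp (y - x).
Proof. by rewrite !hcompE (ipB Hip). Qed.
Lemma perp0 : perp 0 = 0.
Proof. by rewrite perpE (ip0 Hip) scale0r subr0. Qed.
Lemma hcomp0 : hcomp 0 = 0.
Proof. by rewrite hcompE (ip0 Hip). Qed.
Lemma hcomp_mk c s : hcomp (c *: e + s *: h) = s.
Proof. by rewrite hcompE (ipD Hip) !(ipZ Hip) Heh Hhh mulr0 mulr1 add0r. Qed.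
Lemma perp_mk c s : perp (c *: e + s *: h) = c *: e.
Proof. by rewrite perpE -hcompE hcomp_mk addrK. Qed.
Lemma norm_e : `|e| = 1.
Proof.
have := normE2 Hip e; rewrite Hee => /eqP.
by rewrite sqrp_eq1 // => /eqP.
Qed.
Lemma normZe c : `|c *: e| = `|c|.
Proof. by rewrite normrZ norm_e mulr1. Qed.
Lemma perp_h x : ip (perp x) h = 0.
Proof. by rewrite perpE (ipB Hip) (ipZ Hip) Hhh mulr1 subrr. Qed.

Definition sig c x := (2 * ip x h) *: h - x + (2 * c) *: e.
Lemma hcomp_sig c x : ip (sig c x) h = ip x h.
Proof.
rewrite /sig !(ipD Hip) (ipN Hip) !(ipZ Hip) Hhh Heh mulr0 addr0 mulr1.
by rewrite mulr2n mulrDl mul1r addrK.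
Qed.
Lemma perp_sig c x : perp (sig c x) = (2 * c) *: e - perp x.
Proof.
rewrite perpE hcomp_sig perpE /sig mulrDl mul1r scalerDl.
by rewrite [LHS]addrAC [X in X + _ = _]addrAC addrK opprB addrC [RHS]addrC.
Qed.
Lemma sigK c x : sig c (sig c x) = x.
Proof.
rewrite {1}/sig hcomp_sig /sig.
by rewrite opprD addrA addrNK opprB addrC addrNK.
Qed.
Lemma sig0 c : sig c 0 = (2 * c) *: e.
Proof. by rewrite /sig (ip0 Hip) mulr0 scale0r subr0 add0r. Qed.
Lemma sig2 c : sig c ((2 * c) *: e) = 0.
Proof. by rewrite /sig (ipZ Hip) Heh !mulr0 scale0r add0r addNr. Qed.
End Geo.



Section Sp.
Variables (R : realType) (E : normedModType R) (ip : E -> E -> R) (h e : E) (f : R -> R).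
Hypothesis Hip : inner_product ip.
Hypothesis Hhh : ip h h = 1.
Hypothesis Heh : ip e h = 0.
Hypothesis Hee : ip e e = 1.
Hypothesis Hf0 : forall d, 0 <= d -> 0 <= f d.
Hypothesis Hfz : forall d, 0 <= d -> (f d = 0 <-> d = 0).
Hypothesis Hsp : sponge (fle ip h f).
Local Notation le := (fle ip h f).
Local Notation perp := (perp ip h).
Local Notation hcomp := (hcomp ip h).

Lemma f0 : f 0 = 0. Proof. exact/Hfz. Qed.

Lemma fleP x y : le x y <-> f `|perp (y - x)| <= hcomp (y - x).
Proof. by rewrite /fle (perpB _ Hip) (hcompB _ Hip). Qed.

Lemma join2 p q V : le p V -> le q V -> exists j, is_join le [set p; q] j.
Proof.
case: Hsp => _ J _ Hp Hq; apply: J; first exact: finite_set2.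
  by exists p; left.
by exists V => r [->|->].
Qed.

Lemma antisym x y : le x y -> le y x -> x = y.
Proof. by case: Hsp => -[_ A] _ _; apply: A. Qed.

Lemma sym_join c V : 0 <= c -> le 0 V -> le ((2 * c) *: e) V ->
  f c + f `|perp V - c *: e| <= hcomp V.
Proof.
move=> c0 H0 H2.
have [j [jub jl]] := join2 H0 H2.
pose s := sig ip h e c.
have sle x y : le (s x) (s y) <-> le x y.
  rewrite /fle /s !(perp_sig Hip Hhh Heh) /Defs.hcomp !(hcomp_sig Hip Hhh Heh).
  have dd (a b d : E) : (a - b) - (a - d) = d - b.
    by rewrite opprB addrC addrA addrNK.
  by rewrite dd distrC.
have sK x : s (s x) = x by rewrite /s (sigK Hip Hhh Heh).
have Ps p : [set 0; (2 * c) *: e] p -> [set 0; (2 * c) *: e] (s p).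
  by case=> ->; [right; rewrite /s (sig0 _ _ Hip) | left; rewrite /s (sig2 Hip Heh)].
have ejs : j = s j.
  apply: antisym.
    apply: jl => p Pp; rewrite -[p]sK sle; exact/jub/Ps.
  apply/sle; rewrite sK; apply: jl => p Pp; rewrite -[p]sK sle; exact/jub/Ps.
have pj : perp j = c *: e.
  have e1 : perp j = (2 * c) *: e - perp j.
    by rewrite {1}ejs /s (perp_sig Hip Hhh Heh).
  have e2 : (2:R) *: perp j = (2:R) *: (c *: e).
    by rewrite scalerA (scaler_nat 2) mulr2n {1}e1 addrNK.
  have := congr1 ( *:%R (2:R)^-1) e2.
  by rewrite !scalerA mulVf ?pnatr_eq0 // mul1r scale1r.
have := jub 0 (or_introl erefl).
move/fleP; rewrite subr0 pj (normZe Hip Hee) ger0_norm // => fj.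
have /fleP : le j V by apply: jl => p [->|->].
rewrite -(perpB _ Hip) -(hcompB _ Hip) pj => jV.
lra.
Qed.

Lemma mkB a s b t : (b *: e + t *: h) - (a *: e + s *: h) = (b - a) *: e + (t - s) *: h.
Proof. by rewrite opprD addrACA -!scalerBl. Qed.

Lemma mk0 : (0:E) = 0 *: e + 0 *: h.
Proof. by rewrite !scale0r addr0. Qed.

Lemma fle_mk a s b t : le (a *: e + s *: h) (b *: e + t *: h) <-> f `|b - a| <= t - s.
Proof.
by rewrite fleP mkB (perp_mk Hip Hhh Heh) /Defs.hcomp -/(Defs.hcomp ip h _) (hcomp_mk Hip Hhh Heh) (normZe Hip Hee).
Qed.

Lemma Qcond c t : 0 <= c -> 0 <= t ->
  f c + f t <= Num.max (f (c + t)) (f `|c - t|).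
Proof.
move=> c0 t0; set S := Num.max _ _.
have := @sym_join c ((c + t) *: e + S *: h) c0.
rewrite (perp_mk Hip Hhh Heh) /Defs.hcomp -/(Defs.hcomp ip h _) (hcomp_mk Hip Hhh Heh).
rewrite -scalerBl (normZe Hip Hee) [c + t - c]addrAC subrr add0r ger0_norm //; apply.
  by rewrite mk0 fle_mk subr0 subr0 ger0_norm ?addr_ge0 // le_max lexx.
have -> : (2 * c) *: e = (2 * c) *: e + 0 *: h by rewrite scale0r addr0.
rewrite fle_mk subr0 distrC.
have -> : 2 * c - (c + t) = c - t by ring.
by rewrite le_max lexx orbT.
Qed.

Lemma hcompE' x : hcomp x = ip x h. Proof. by []. Qed.

Lemma le_perp x y : le x y -> f `|perp y - perp x| <= hcomp y - hcomp x.
Proof. by []. Qed.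

Lemma perp_mk' c s : perp (c *: e + s *: h) = c *: e.
Proof. exact: (perp_mk Hip Hhh Heh). Qed.
Lemma hcomp_mk' c s : hcomp (c *: e + s *: h) = s.
Proof. exact: (hcomp_mk Hip Hhh Heh). Qed.

Lemma asc_super : ascending_nonneg f -> superadditive f.
Proof.
move=> asc x y x0 y0; set D := x + y; set s0 := f x - f y.
set q := D *: e + s0 *: h.
set U1 := x *: e + f x *: h.
set U2 := D *: e + f D *: h.
have D0 : 0 <= D by rewrite addr_ge0.
have fxD : f x <= f D by apply: asc => //; rewrite lerDl.
have fyD : f y <= f D by apply: asc => //; rewrite lerDr.
have fx0 := Hf0 x0; have fy0 := Hf0 y0.
have [j [jub jl]] : exists j, is_join le [set 0; q] j.
  apply: (@join2 _ _ U1).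
    by rewrite mk0 fle_mk !subr0 ger0_norm.
  rewrite fle_mk distrC /D addrAC subrr add0r ger0_norm // /s0; lra.
have hU1 : le j U1 by apply: jl => p [->|->]; [rewrite mk0 fle_mk !subr0 ger0_norm |
  rewrite fle_mk distrC /D addrAC subrr add0r ger0_norm // /s0; lra].
have hU2 : le j U2 by apply: jl => p [->|->]; [rewrite mk0 fle_mk !subr0 ger0_norm |
  rewrite fle_mk subrr normr0 f0 /s0; lra].
have h0 : le 0 j by apply: jub; left.
have hq : le q j by apply: jub; right.
move: h0 hq hU1 hU2 => /le_perp + /le_perp + /le_perp + /le_perp.
rewrite (perp0 _ Hip) (hcomp0 _ Hip) !subr0 /q /U1 /U2.
rewrite !(perp_mk Hip Hhh Heh) !(hcomp_mk Hip Hhh Heh).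
set a := perp j; set s := hcomp j => h0 hq hU1 hU2.
have tri : D <= `|a| + `|D *: e - a|.
  have := ler_normD (D *: e - a) a.
  by rewrite subrK (normZe Hip Hee) ger0_norm // addrC.
have ax : x *: e = a.
  have fz : f `|x *: e - a| = 0.
    apply/le_anti; rewrite Hf0 ?normr_ge0 // andbT.
    case: (leP x `|a|) => [xa|ax'].
      have := asc _ _ x0 xa; lra.
    have yb : y <= `|D *: e - a| by rewrite /D in tri *; lra.
    have := asc _ _ y0 yb; rewrite distrC in hq; rewrite /s0 in hq; lra.
  by have /normr0_eq0/subr0_eq := (Hfz (normr_ge0 _)).1 fz.
rewrite -ax -scalerBl (normZe Hip Hee) in hU2.
rewrite -ax (normZe Hip Hee) ger0_norm // in h0.
have Dx : D - x = y by rewrite /D; ring.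
rewrite Dx ger0_norm // in hU2; lra.
Qed.

Lemma inc_lsc : increasing_nonneg f -> lsc_nonneg f.
Proof.
move=> inc x x0 eps eps0.
have asc : forall a b, 0 <= a -> a <= b -> f a <= f b.
  move=> a b a0; rewrite le_eqVlt => /orP[/eqP->//|ab].
  exact/ltW/inc.
case: (pselect (exists2 d : R, 0 < d & forall y, 0 <= y -> `|y - x| < d -> f x - eps < f y)) => // H.
exfalso.
have xpos : 0 < x.
  rewrite lt_neqAle x0 andbT; apply/negP => /eqP x0'; apply: H.
  exists 1 => // y y0 _; rewrite -x0' f0; have := Hf0 y0; lra.
set L := f x - eps.
have bL : forall y, 0 <= y -> y < x -> f y <= L.
  move=> y y0 yx; rewrite leNgt; apply/negP => Ly; apply: H.
  exists (x - y); first lra.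
  move=> z z0; rewrite ltr_norml => /andP[z1 z2].
  have := asc y z y0 (ltac:(lra)); rewrite /L in Ly; lra.
pose T := fun r => exists z, [/\ x < z, z < 2 * x & f z = r].
have T0 : T !=set0 by exists (f (3 * x / 2)); exists (3 * x / 2); split => //; lra.
have lbT : lbound T (f x) by move=> r [z [xz _ <-]]; apply: asc; lra.
set Rr := inf T.
have RrT : forall r, T r -> Rr <= r := ge_inf (ex_intro _ (f x) lbT).
have fxR : f x <= Rr := lb_le_inf T0 lbT.
have gtR : forall z, x < z -> Rr < f z.
  move=> z xz; case: (ltP z (2 * x)) => z2.
    have m1 : x < (x + z) / 2 by lra.
    have m2 : (x + z) / 2 < 2 * x by lra.
    have m3 : (x + z) / 2 < z by lra.
    have := RrT (f ((x + z) / 2)) (ex_intro _ ((x + z) / 2) (And3 m1 m2 erefl)).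
    have := inc ((x + z) / 2) z (ltac:(lra)) m3; lra.
  have m1 : x < 3 * x / 2 by lra.
  have m2 : 3 * x / 2 < 2 * x by lra.
  have m3 : 3 * x / 2 < z by lra.
  have := RrT (f (3 * x / 2)) (ex_intro _ (3 * x / 2) (And3 m1 m2 erefl)).
  have := inc (3 * x / 2) z (ltac:(lra)) m3; lra.
set dl := Rr - L.
have dl0 : 0 < dl by rewrite /dl /L; lra.
set q := (2 * x) *: e + (- dl) *: h.
have x20 : 0 <= 2 * x by lra.
have [j [jub jl]] : exists j, is_join le [set 0; q] j.
  apply: (@join2 _ _ (0 *: e + f (2 * x) *: h)).
    by rewrite mk0 fle_mk !subr0 normr0 f0 Hf0.
  by rewrite fle_mk sub0r normrN ger0_norm //; lra.
have h0 : le 0 j by apply: jub; left.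
have hq : le q j by apply: jub; right.
move: h0 hq => /le_perp + /le_perp.
rewrite (perp0 _ Hip) (hcomp0 _ Hip) !subr0 /q.
rewrite !(perp_mk Hip Hhh Heh) !(hcomp_mk Hip Hhh Heh).
set a := perp j; set s := hcomp j => h0 hq.
have sL : L < s.
  case: (leP x `|a|) => xa.
    have := asc _ _ x0 xa; rewrite /L; lra.
  have tri : 2 * x <= `|a| + `|a - (2 * x) *: e|.
    have := ler_normD a ((2 * x) *: e - a).
    by rewrite [a + (_ - a)]addrC subrK (normZe Hip Hee) ger0_norm // [`|a - _|]distrC.
  have := gtR `|a - (2 * x) *: e| (ltac:(lra)); rewrite /dl in hq; lra.
have [r [z [xz z2 <-]] zlt] := inf_lt T0 (ltac:(rewrite -/Rr; lra) : Rr < Rr + (s - L)).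
set t := 2 * x - z.
set S := Num.max (f t) (f z - dl).
have hV : le j (t *: e + S *: h).
  apply: jl => p [->|->].
    rewrite mk0 fle_mk !subr0 ger0_norm /S ?le_max ?lexx //; rewrite /t; lra.
  rewrite fle_mk /t.
  have -> : 2 * x - z - 2 * x = - z by ring.
  rewrite normrN ger0_norm; last lra.
  rewrite opprK; have : f z - dl <= S by rewrite /S le_max lexx orbT.
  lra.
move: hV => /le_perp; rewrite (perp_mk Hip Hhh Heh) (hcomp_mk Hip Hhh Heh) -/a -/s => hV.
have fpos := Hf0 (normr_ge0 (t *: e - a)).
have ftL := bL t (ltac:(rewrite /t; lra)) (ltac:(rewrite /t; lra)).
have : s <= S by lra.
rewrite le_max => /orP[]; rewrite /dl; lra.
Qed.
End Sp.

Lemma pow2_large (R : realType) (r : R) : exists n : nat, r <= 2 ^+ n.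
Proof.
case: (leP r 0) => r0; first by exists 0%N; rewrite expr0; lra.
exists (Num.Def.archi_bound r); apply/ltW/(lt_le_trans (archi_boundP (ltW r0))).
by rewrite -natrX ler_nat ltnW // ltn_expl.
Qed.

Lemma lsc_asc (R : realType) (f : R -> R) :
  (forall d, 0 <= d -> 0 <= f d) -> f 0 = 0 ->
  (forall c t, 0 <= c -> 0 <= t -> f c + f t <= Num.max (f (c + t)) (f `|c - t|)) ->
  lsc_nonneg f -> ascending_nonneg f.
Proof.
move=> Hf0 f0 Q lsc a b a0 ab; rewrite leNgt; apply/negP => fba.
have fb0 := Hf0 _ (le_trans a0 ab).
have apos : 0 < a.
  rewrite lt_neqAle a0 andbT; apply/negP => /eqP a0'.
  by move: fba; rewrite -a0' f0; lra.
pose S := [set t : R | a <= t /\ t <= b /\ f t <= f b].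
have Sb : S b by split => //; split.
have S0 : S !=set0 by exists b.
have lbS : lbound S a by move=> t [].
set X := inf S.
have aX : a <= X := lb_le_inf S0 lbS.
have XS : forall t, S t -> X <= t := ge_inf (ex_intro _ a lbS).
have Xb : X <= b := XS b Sb.
have below : forall t, a <= t -> t < X -> f b < f t.
  move=> t aT tX; rewrite ltNge; apply/negP => ftb.
  have : X <= t by apply: XS; split => //; split => //; apply: ltW (lt_le_trans tX Xb).
  lra.
have X0 : 0 <= X by lra.
have fX : f X <= f b.
  rewrite leNgt; apply/negP => fbX.
  have [d d0 Hd] := lsc X X0 (f X - f b) (ltac:(lra)).
  have [t St td] := inf_lt S0 (ltac:(rewrite -/X; lra) : X < X + d).
  have Xt := XS t St.
  case: St => _ [_ ftb].
  have := Hd t (ltac:(lra)) (ltac:(rewrite ger0_norm; lra)).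
  lra.
have aX' : a < X.
  rewrite lt_neqAle aX andbT; apply/negP => /eqP aXe.
  by move: fX; rewrite -aXe; lra.
have key : forall t, a <= t -> t < X -> f X < f t.
  by move=> t aT tX; have := below t aT tX; lra.
have dbl : forall n : nat, forall c, 0 <= c -> c < X ->
    X - c <= 2 ^+ n * (X - a) -> f X < f c.
  elim=> [|n IH] c c0 cX H.
    by apply: key => //; rewrite expr0 mul1r in H; lra.
  pose c' := (c + X) / 2.
  have c'0 : 0 <= c' by rewrite /c'; lra.
  have c'X : c' < X by rewrite /c'; lra.
  have H' : X - c' <= 2 ^+ n * (X - a).
    rewrite exprS in H; rewrite /c'; lra.
  have fc' := IH c' c'0 c'X H'.
  have := Q c' (X - c') c'0 (ltac:(lra)).
  have -> : c' + (X - c') = X by ring.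
  have -> : c' - (X - c') = c by rewrite /c'; field.
  rewrite ger0_norm // le_max => /orP[]; have := Hf0 (X - c') (ltac:(lra)); lra.
have [n Hn] := pow2_large (X / (X - a)).
have fX2 : f X < f (X / 2).
  apply: (dbl n); [lra | lra |].
  have XaP : 0 < X - a by lra.
  have : X <= 2 ^+ n * (X - a).
    by rewrite -ler_pdivrMr // .
  lra.
have := Q (X / 2) (X / 2) (ltac:(lra)) (ltac:(lra)).
have -> : X / 2 + X / 2 = X by field.
rewrite subrr normr0 f0 le_max => /orP[]; have := Hf0 X X0; lra.
Qed.




Section Dim3.
Variables (R : realType) (E : normedModType R) (ip : E -> E -> R) (h e w : E) (f : R -> R).
Hypothesis Hip : inner_product ip.
Hypothesis Hhh : ip h h = 1.
Hypothesis Heh : ip e h = 0.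
Hypothesis Hee : ip e e = 1.
Hypothesis Hwh : ip w h = 0.
Hypothesis Hwe : ip w e = 0.
Hypothesis Hww : ip w w = 1.
Hypothesis Hf0 : forall d, 0 <= d -> 0 <= f d.
Hypothesis Hfz : forall d, 0 <= d -> (f d = 0 <-> d = 0).
Hypothesis Hsp : sponge (fle ip h f).
Local Notation le := (fle ip h f).
Local Notation perp := (perp ip h).
Local Notation hcomp := (hcomp ip h).

Lemma perp_gen u s : ip u h = 0 -> perp (u + s *: h) = u.
Proof.
move=> uh; rewrite perpE (ipD Hip) (ipZ Hip) uh Hhh add0r mulr1.
by rewrite addrK.
Qed.
Lemma hcomp_gen u s : ip u h = 0 -> hcomp (u + s *: h) = s.
Proof. by move=> uh; rewrite /Defs.hcomp (ipD Hip) (ipZ Hip) uh Hhh add0r mulr1. Qed.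

Lemma ew_h a b : ip (a *: e + b *: w) h = 0.
Proof. by rewrite (ipD Hip) !(ipZ Hip) Heh Hwh !mulr0 addr0. Qed.

Lemma norm_ew a b : `|a *: e + b *: w| = Num.sqrt (a ^+ 2 + b ^+ 2).
Proof.
have H : `|a *: e + b *: w| ^+ 2 = a ^+ 2 + b ^+ 2.
  rewrite (normE2 Hip) (ipD Hip) !(ipZ Hip).
  rewrite (ipC Hip e) (ipC Hip w) !(ipD Hip) !(ipZ Hip) Hee Hww Hwe (ipC Hip e) Hwe.
  by rewrite !mulr0 !mulr1 addr0 add0r !expr2.
by rewrite -H sqrtr_sqr ger0_norm.
Qed.

Lemma Q3 c r : 0 <= c -> 0 <= r -> f c + f r <= f (Num.sqrt (c ^+ 2 + r ^+ 2)).
Proof.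
move=> c0 r0.
set S := f (Num.sqrt (c ^+ 2 + r ^+ 2)).
have := @sym_join R E ip h e f Hip Hhh Heh Hee Hsp c ((c *: e + r *: w) + S *: h) c0.
rewrite perp_gen ?ew_h // hcomp_gen ?ew_h //.
have -> : c *: e + r *: w - c *: e = 0 *: e + r *: w.
  by rewrite scale0r add0r addrAC subrr add0r.
rewrite norm_ew expr0n /= add0r sqrtr_sqr ger0_norm //; apply.
  by apply/(fleP _ _ Hip); rewrite subr0 perp_gen ?ew_h // hcomp_gen ?ew_h // norm_ew.
apply/(fleP _ _ Hip).
have -> : c *: e + r *: w + S *: h - (2 * c) *: e = (- c) *: e + r *: w + S *: h.
  rewrite addrAC [c *: e + r *: w - _]addrAC -scalerBl.
  by congr (_ *: _ + _ + _); ring.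
by rewrite perp_gen ?ew_h // hcomp_gen ?ew_h // norm_ew sqrrN.
Qed.

Lemma asc3 : ascending_nonneg f.
Proof.
move=> a b a0 ab.
have b0 : 0 <= b := le_trans a0 ab.
have d0 : 0 <= b ^+ 2 - a ^+ 2 by rewrite subr_ge0 lerXn2r // nnegrE.
have := Q3 a0 (sqrtr_ge0 (b ^+ 2 - a ^+ 2)).
rewrite sqr_sqrtr // [a ^+ 2 + _]addrC subrK sqrtr_sqr ger0_norm //.
have := Hf0 (sqrtr_ge0 (b ^+ 2 - a ^+ 2)); lra.
Qed.
End Dim3.

Section Topo.
Variables (R : realType) (E : normedModType R) (ip : E -> E -> R) (h : E) (f : R -> R).
Hypothesis Hip : inner_product ip.
Hypothesis Hhh : ip h h = 1.
Local Notation le := (fle ip h f).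
Local Notation perp := (perp ip h).
Local Notation hcomp := (hcomp ip h).

Lemma perp_sq u : `|perp u| ^+ 2 + (ip u h) ^+ 2 = `|u| ^+ 2.
Proof.
rewrite !(normE2 Hip) perpE (ipB Hip) (ipZ Hip) (ipC Hip u) (ipC Hip h).
rewrite !(ipB Hip) !(ipZ Hip) Hhh (ipC Hip h u); ring.
Qed.

Lemma perp_le u : `|perp u| <= `|u|.
Proof.
have := perp_sq u; have := sqr_ge0 (ip u h) => ? ?.
rewrite -(ler_pXn2r (_ : 0 < 2)%N) ?nnegrE //; lra.
Qed.

Lemma ip_le u : `|ip u h| <= `|u|.
Proof.
have := perp_sq u; have := sqr_ge0 `|perp u| => ? ?.
rewrite -(ler_pXn2r (_ : 0 < 2)%N) ?nnegrE // real_normK ?num_real //; lra.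
Qed.

Lemma lsc_closed : lsc_nonneg f -> closed [set p : E * E | le p.1 p.2].
Proof.
move=> lsc [x y] cl /=; apply/(fleP _ _ Hip).
rewrite leNgt; apply/negP => H.
set N0 := `|perp (y - x)| in H; set H0 := hcomp (y - x) in H.
set eps := (f N0 - H0) / 2.
have eps0 : 0 < eps by rewrite /eps; lra.
have [d d0 Hd] := lsc N0 (normr_ge0 _) eps eps0.
set r := Num.min d eps / 2.
have r0 : 0 < r by rewrite /r divr_gt0 // lt_min d0 eps0.
have rd : 2 * r <= d by rewrite /r mulrC divfK ?pnatr_eq0 // ge_min lexx.
have re : 2 * r <= eps by rewrite /r mulrC divfK ?pnatr_eq0 // ge_min lexx orbT.
have [[x' y'] [/= A' B']] := cl _ (@nbhsx_ballx _ _ (x, y) r r0).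
move: B' => /= [].
rewrite -!ball_normE /ball_ /= => bx byy.
move/(fleP _ _ Hip): A' => A'.
have dv : `|(y' - x') - (y - x)| < 2 * r.
  have -> : y' - x' - (y - x) = (y' - y) - (x' - x).
    by rewrite !opprB addrACA [RHS]addrACA [- x' + _]addrC.
  have := ler_normB (y' - y) (x' - x).
  rewrite distrC in bx; rewrite distrC in byy; lra.
have pv := perp_le ((y' - x') - (y - x)).
rewrite -(perpB _ Hip) in pv.
have := ler_dist_dist (perp (y' - x')) (perp (y - x)) => dd.
have := Hd `|perp (y' - x')| (normr_ge0 _) (ltac:(rewrite /N0; lra)) => fN.
have iv := ip_le ((y' - x') - (y - x)).
rewrite (ipB Hip) in iv.
have := ler_norm (ip (y' - x') h - ip (y - x) h).
rewrite /eps in re fN.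
rewrite /H0 /Defs.hcomp in H A' fN re; lra.
Qed.
End Topo.

Lemma closed_lsc (R : realType) (E : normedModType R) (ip : E -> E -> R) (h e : E) (f : R -> R) :
  inner_product ip -> ip h h = 1 -> ip e h = 0 -> ip e e = 1 ->
  closed [set p : E * E | fle ip h f p.1 p.2] -> lsc_nonneg f.
Proof.
move=> Hip Hhh Heh Hee cl x x0 eps eps0.
case: (pselect (exists2 d : R, 0 < d & forall y, 0 <= y -> `|y - x| < d -> f x - eps < f y)) => // H.
exfalso.
have : fle ip h f (0 *: e + 0 *: h) (x *: e + (f x - eps) *: h).
  apply: (cl (0 *: e + 0 *: h, x *: e + (f x - eps) *: h)) => B nB.
  have [r r0 rB] := (nbhs_ballP _ _).1 nB.
  case: (pselect (exists y, [/\ 0 <= y, `|y - x| < r & f y <= f x - eps])) => [[y [y0 yr fy]]|Hn].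
    exists (0 *: e + 0 *: h, y *: e + (f x - eps) *: h); split.
      by rewrite /= (fle_mk _ Hip Hhh Heh Hee) !subr0 ger0_norm.
    apply: rB; split; first exact: ballxx.
    rewrite /= -ball_normE /ball_ /= (mkB h e) subrr scale0r addr0 (normZe Hip Hee) distrC //.
  exfalso; apply: H; exists r => // y y0 yx; rewrite ltNge; apply/negP => fy; apply: Hn; by exists y; split.
move/(fle_mk _ Hip Hhh Heh Hee); rewrite !subr0 ger0_norm //; lra.
Qed.

Lemma dep2 (R : realType) (E : normedModType R) (a : E) (v : 'I_2 -> E) (al : 'I_2 -> R) :
  (forall i, v i = al i *: a) -> ~ lin_indep v.
Proof.
move=> Hv Hl.
have key : forall c0 c1, c0 * al ord0 + c1 * al (lift ord0 ord0) = 0 -> c0 = 0 /\ c1 = 0.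
  move=> c0 c1 H.
  have := Hl (fun i => nth 0 [:: c0; c1] i).
  rewrite big_ord_recl big_ord1 /= !Hv !scalerA -scalerDl H scale0r => /(_ erefl) Hc.
  by split; [apply: (Hc ord0) | apply: (Hc (lift ord0 ord0))].
have [h1 h2] := key (al (lift ord0 ord0)) (- al ord0) (ltac:(ring)).
have a0 : al ord0 = 0 by rewrite -[al ord0]opprK h2 oppr0.
have [h3 _] := key 1 0 (ltac:(rewrite a0; ring)).
by move/eqP: h3; rewrite oner_eq0.
Qed.

Lemma dep3 (R : realType) (E : normedModType R) (a b : E) (v : 'I_3 -> E) (al be : 'I_3 -> R) :
  (forall i, v i = al i *: a + be i *: b) -> ~ lin_indep v.
Proof.
move=> Hv Hl.
set i1 : 'I_3 := lift ord0 ord0; set i2 : 'I_3 := lift ord0 (lift ord0 ord0).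
have key : forall c0 c1 c2, c0 * al ord0 + c1 * al i1 + c2 * al i2 = 0 ->
    c0 * be ord0 + c1 * be i1 + c2 * be i2 = 0 -> [/\ c0 = 0, c1 = 0 & c2 = 0].
  move=> c0 c1 c2 H1 H2.
  set c := (fun i : 'I_3 => nth 0 [:: c0; c1; c2] i).
  have := Hl c.
  have -> : \sum_(i < 3) c i *: v i =
      (\sum_(i < 3) c i * al i) *: a + (\sum_(i < 3) c i * be i) *: b.
    rewrite (eq_bigr (fun i => (c i * al i) *: a + (c i * be i) *: b)).
      by rewrite big_split /= -!scaler_suml.
    by move=> i _; rewrite Hv scalerDr !scalerA.
  rewrite !big_ord_recl !big_ord0 /= -/i1 -/i2 !addr0 addrA addrA.
  rewrite H1 H2 !scale0r addr0 => /(_ erefl) Hc.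
  by split; [apply: (Hc ord0) | apply: (Hc i1) | apply: (Hc i2)].
set a0 := al ord0 in key *; set a1 := al i1 in key *; set a2 := al i2 in key *.
set b0 := be ord0 in key *; set b1 := be i1 in key *; set b2 := be i2 in key *.
have [m12 m20 m01] := key (a1 * b2 - a2 * b1) (a2 * b0 - a0 * b2) (a0 * b1 - a1 * b0)
  (ltac:(ring)) (ltac:(ring)).
have [n1 n0 _] := key (- a1) a0 0 (ltac:(ring))
  (ltac:(transitivity (a0 * b1 - a1 * b0); [ring | exact: m01])).
have [_ p0 _] := key (- b1) b0 0
  (ltac:(transitivity (- (a0 * b1 - a1 * b0)); [ring | rewrite m01 oppr0 //])) (ltac:(ring)).
have [q _ _] := key 1 0 0 (ltac:(rewrite n0; ring)) (ltac:(rewrite p0; ring)).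
by move/eqP: q; rewrite oner_eq0.
Qed.

Section Exist.
Variables (R : realType) (E : normedModType R) (ip : E -> E -> R) (h : E).
Hypothesis Hip : inner_product ip.
Hypothesis Hhh : ip h h = 1.

Lemma normalize (u : E) : u != 0 ->
  ip (`|u|^-1 *: u) (`|u|^-1 *: u) = 1 /\ forall k, ip u k = 0 -> ip (`|u|^-1 *: u) k = 0.
Proof.
move=> u0; split; last by move=> k uk; rewrite (ipZ Hip) uk mulr0.
rewrite (ipZ Hip) (ipC Hip) (ipZ Hip) -(normE2 Hip) mulrA -expr2 -exprMn mulVf //.
  by rewrite expr1n.
by rewrite normr_eq0.
Qed.

Lemma exists_e : dim_ge E 2 -> exists e, ip e h = 0 /\ ip e e = 1.
Proof.
case=> v Hv.
case: (pselect (exists i, perp ip h (v i) != 0)) => [[i ni]|H].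
  have [n1 n2] := normalize ni.
  by exists (`|perp ip h (v i)|^-1 *: perp ip h (v i)); split => //; apply: n2; apply: (perp_h Hip Hhh).
exfalso; apply: (@dep2 _ _ h v (fun i => ip (v i) h)) Hv => i.
have : perp ip h (v i) = 0.
  by case: (eqVneq (perp ip h (v i)) 0) => // ni; exfalso; apply: H; exists i.
by rewrite perpE => /subr0_eq.
Qed.

Lemma exists_w e : ip e h = 0 -> ip e e = 1 -> dim_ge E 3 ->
  exists w, [/\ ip w h = 0, ip w e = 0 & ip w w = 1].
Proof.
move=> Heh Hee [v Hv].
pose g u := perp ip h u - ip u e *: e.
have gh u : ip (g u) h = 0 by rewrite (ipB Hip) (perp_h Hip Hhh) (ipZ Hip) Heh mulr0 subrr.
have ge u : ip (g u) e = 0.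
  rewrite (ipB Hip) perpE !(ipB Hip) !(ipZ Hip) Hee (ipC Hip h) Heh mulr0 subr0 mulr1.
  by rewrite subrr.
case: (pselect (exists i, g (v i) != 0)) => [[i ni]|H].
  have [n1 n2] := normalize ni.
  by exists (`|g (v i)|^-1 *: g (v i)); split => //; apply: n2.
exfalso; apply: (@dep3 _ _ h e v (fun i => ip (v i) h) (fun i => ip (v i) e)) Hv => i.
have : g (v i) = 0.
  by case: (eqVneq (g (v i)) 0) => // ni; exfalso; apply: H; exists i.
rewrite /g perpE => /subr0_eq/eqP; rewrite subr_eq => /eqP vi.
by rewrite {1}vi addrC.
Qed.
End Exist.



Unset Implicit Arguments. Set Strict Implicit.

Theorem mainTheorem16 (R : realType) (E : completeNormedModType R)
  (ip : E -> E -> R) (h : E) (f : R -> R) :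
  inner_product ip ->
  dim_ge E 2 ->
  `|h| = 1 ->
  (forall d, 0 <= d -> 0 <= f d) ->
  (forall d, 0 <= d -> (f d = 0 <-> d = 0)) ->
  sponge (fle ip h f) ->
  let P1 := closed [set p : E * E | fle ip h f p.1 p.2] in
  let P2 := lsc_nonneg f in
  let P3 := ascending_nonneg f in
  let P4 := increasing_nonneg f in
  let P5 := superadditive f in
  [/\ (P1 <-> P2), (P2 <-> P3), (P3 <-> P4), (P4 <-> P5)
    & (dim_ge E 3 -> [/\ P1, P2, P3, P4 & P5])].
Proof.
move=> Hip dim2 hn Hf0 Hfz Hsp P1 P2 P3 P4 P5.
have Hhh : ip h h = 1 by rewrite -(normE2 Hip) hn expr1n.
have [e [Heh Hee]] := exists_e Hip Hhh dim2.
have f0' : f 0 = 0 by apply/Hfz.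
have p12 : P1 -> P2 := closed_lsc Hip Hhh Heh Hee.
have p21 : P2 -> P1 := lsc_closed Hip Hhh.
have p23 : P2 -> P3 := lsc_asc Hf0 f0' (Qcond Hip Hhh Heh Hee Hsp).
have p35 : P3 -> P5 := asc_super Hip Hhh Heh Hee Hf0 Hfz Hsp.
have p54 : P5 -> P4.
  move=> sup a b a0 ab.
  have ba0 : 0 <= b - a by rewrite subr_ge0 ltW.
  have H1 := sup a (b - a) a0 ba0.
  rewrite [a + _]addrC subrK in H1.
  have H2 : f (b - a) != 0.
    apply/eqP => /(Hfz _ ba0) /eqP; rewrite subr_eq0 => /eqP ba.
    by move: ab; rewrite ba ltxx.
  have H3 := Hf0 _ ba0.
  have H4 : 0 < f (b - a) by rewrite lt_neqAle eq_sym H2 H3.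
  lra.
have p43 : P4 -> P3.
  move=> inc a b a0; rewrite le_eqVlt => /orP[/eqP->//|ab].
  exact/ltW/inc.
have p42 : P4 -> P2 := inc_lsc Hip Hhh Heh Hee Hf0 Hfz Hsp.
split; [split | split | split | split |].
- exact: p12.
- exact: p21.
- exact: p23.
- by move=> /p35 /p54 /p42.
- by move=> /p35 /p54.
- exact: p43.
- by move=> /p43 /p35.
- exact: p54.
move=> dim3.
have [w [Hwh Hwe Hww]] := exists_w Hip Hhh Heh Hee dim3.
have a3 : P3 := asc3 Hip Hhh Heh Hee Hwh Hwe Hww Hf0 Hsp.
have a5 := p35 a3; have a4 := p54 a5; have a2 := p42 a4.
by split => //; apply: p21.
Qed.
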